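(* Let $\alpha\in(0,0.4701)$ and let $c^{(\alpha)}_{i,k}$ be the L1-2 coefficients defined in the context. Then, for sufficiently small temporal stepsize $\tau$, $$\frac{1}{c^{(\alpha)}_{1,k}}<C^{(\alpha)}(k\tau)^{\alpha},\qquad k\ge1,$$ where $C^{(\alpha)}=\max\Big\{\frac{6\Gamma(1-\alpha)}{\tilde a^{\alpha}},\frac{3\Gamma(2-\alpha)}{\alpha\,\tilde a^{\alpha}}\Big\}$.
   Context: Let $\tilde a>0$, $T>\tilde a$, $N\in\mathbb{Z}^+$, $\tau=(T-\tilde a)/N$, $t_k=\tilde a+k\tau$ ($k=0,\dots,N$). Define $a^{(\alpha)}_{i,k}=\big(\log\frac{t_k}{t_{i-1}}\big)^{1-\alpha}-\big(\log\frac{t_k}{t_i}\big)^{1-\alpha}$ and, for $i\ge2$, $$b^{(\alpha)}_{i,k}=\frac{1}{\log\frac{t_i}{t_{i-2}}}\Big\{\log\tfrac{t_i}{t_{i-1}}\Big[\Big(\log\tfrac{t_k}{t_i}\Big)^{1-\alpha}+\Big(\log\tfrac{t_k}{t_{i-1}}\Big)^{1-\alpha}\Big]+\tfrac{2}{2-\alpha}\Big[\Big(\log\tfrac{t_k}{t_i}\Big)^{2-\alpha}-\Big(\log\tfrac{t_k}{t_{i-1}}\Big)^{2-\alpha}\Big]\Big\}.$$ The coefficients are: $c^{(\alpha)}_{1,1}=\frac{a^{(\alpha)}_{1,1}}{\Gamma(2-\alpha)\log\frac{t_1}{t_0}}$; for $k=2$: $c^{(\alpha)}_{1,2}=\frac{a^{(\alpha)}_{1,2}+b^{(\alpha)}_{2,2}}{\Gamma(2-\alpha)\log\frac{t_1}{t_0}}$,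 $c^{(\alpha)}_{2,2}=\frac{a^{(\alpha)}_{2,2}-b^{(\alpha)}_{2,2}}{\Gamma(2-\alpha)\log\frac{t_2}{t_1}}$; for $k\ge3$: $c^{(\alpha)}_{1,k}=\frac{a^{(\alpha)}_{1,k}+b^{(\alpha)}_{2,k}}{\Gamma(2-\alpha)\log\frac{t_1}{t_0}}$, $c^{(\alpha)}_{i,k}=\frac{a^{(\alpha)}_{i,k}-b^{(\alpha)}_{i,k}+b^{(\alpha)}_{i+1,k}}{\Gamma(2-\alpha)\log\frac{t_i}{t_{i-1}}}$ for $2\le i\le k-1$, and $c^{(\alpha)}_{k,k}=\frac{a^{(\alpha)}_{k,k}-b^{(\alpha)}_{k,k}}{\Gamma(2-\alpha)\log\frac{t_k}{t_{k-1}}}$. *)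

(* Defs.v *)
From Stdlib Require Import Reals.
From Coquelicot Require Import Coquelicot.
Open Scope R_scope.

(* Real power x^p for x >= 0, with the convention 0^p = 0 (p > 0 here). *)
Definition rpow (x p : R) : R := if Rle_dec x 0 then 0 else Rpower x p.

Definition Gamma (s : R) : R :=
  RInt_gen (fun t => Rpower t (s - 1) * exp (- t)) (at_right 0) (Rbar_locally p_infty).

Definition tau (a0 T : R) (N : nat) : R := (T - a0) / INR N.
Definition tk (a0 T : R) (N : nat) (k : nat) : R := a0 + INR k * tau a0 T N.

Definition acoef (a0 T : R) (N : nat) (al : R) (i k : nat) : R :=
  let t := tk a0 T N in
  rpow (ln (t k / t (i - 1)%nat)) (1 - al) - rpow (ln (t k / t i)) (1 - al).

Definition bcoef (a0 T : R) (N : nat) (al : R) (i k : nat) : R :=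
  let t := tk a0 T N in
  / ln (t i / t (i - 2)%nat) *
  ( ln (t i / t (i - 1)%nat) *
      (rpow (ln (t k / t i)) (1 - al) + rpow (ln (t k / t (i - 1)%nat)) (1 - al))
    + 2 / (2 - al) *
      (rpow (ln (t k / t i)) (2 - al) - rpow (ln (t k / t (i - 1)%nat)) (2 - al))).

Definition ccoef (a0 T : R) (N : nat) (al : R) (i k : nat) : R :=
  let t := tk a0 T N in
  let den := Gamma (2 - al) * ln (t i / t (i - 1)%nat) in
  if (k =? 1)%nat then acoef a0 T N al 1 1 / den
  else if (i =? 1)%nat then (acoef a0 T N al 1 k + bcoef a0 T N al 2 k) / den
  else if (i =? k)%nat then (acoef a0 T N al k k - bcoef a0 T N al k k) / den
  else (acoef a0 T N al i k - bcoef a0 T N al i k + bcoef a0 T N al (i + 1) k) / den.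

Definition Calpha (a0 al : R) : R :=
  Rmax (6 * Gamma (1 - al) / Rpower a0 al) (3 * Gamma (2 - al) / (al * Rpower a0 al)).

(* Main.v *)
Require Import Defs.
From Stdlib Require Import Reals Lra Lia Psatz.
From Coquelicot Require Import Coquelicot.
Open Scope R_scope.

Lemma exp_le_m (x y : R) : x <= y -> exp x <= exp y.
Proof. intros H; destruct (Rle_lt_or_eq_dec _ _ H) as [H1|H1].
  left; apply exp_increasing; auto. subst; lra. Qed.

Lemma Rpower_anti (a b e : R) : 0 < a -> a <= b -> e <= 0 -> Rpower b e <= Rpower a e.
Proof.
  intros Ha Hab He. unfold Rpower. apply exp_le_m.
  assert (ln a <= ln b) by (apply ln_le; lra). nra.
Qed.

Lemma Rpower_mono (a b e : R) : 0 < a -> a <= b -> 0 <= e -> Rpower a e <= Rpower b e.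
Proof.
  intros Ha Hab He. unfold Rpower. apply exp_le_m.
  assert (ln a <= ln b) by (apply ln_le; lra). nra.
Qed.

Lemma Rpower_pos (a e : R) : 0 < Rpower a e.
Proof. unfold Rpower; apply exp_pos. Qed.

Lemma tangent_conc (r x y : R) : 0 <= r <= 1 -> 0 < x -> 0 < y ->
  Rpower y r <= Rpower x r + r * Rpower x (r - 1) * (y - x).
Proof.
  intros Hr Hx Hy.
  destruct (Rtotal_order x y) as [Hlt|[Heq|Hgt]].
  - destruct (MVT_cor2 (fun z => Rpower z r) (fun z => r * Rpower z (r-1)) x y Hlt)
      as [c [Hc1 Hc2]].
    { intros c Hc. apply derivable_pt_lim_power; lra. }
    assert (Rpower c (r-1) <= Rpower x (r-1)) by (apply Rpower_anti; lra).
    assert (r * Rpower c (r-1) * (y - x) <= r * Rpower x (r-1) * (y-x)).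
    { apply Rmult_le_compat_r; [lra|]. apply Rmult_le_compat_l; lra. }
    lra.
  - subst; lra.
  - destruct (MVT_cor2 (fun z => Rpower z r) (fun z => r * Rpower z (r-1)) y x Hgt)
      as [c [Hc1 Hc2]].
    { intros c Hc. apply derivable_pt_lim_power; lra. }
    assert (Rpower x (r-1) <= Rpower c (r-1)) by (apply Rpower_anti; lra).
    assert (r * Rpower x (r-1) * (x - y) <= r * Rpower c (r-1) * (x-y)).
    { apply Rmult_le_compat_r; [lra|]. apply Rmult_le_compat_l; lra. }
    lra.
Qed.

Lemma tangent_conv (r x y : R) : 1 <= r -> 0 < x -> 0 < y ->
  Rpower x r + r * Rpower x (r - 1) * (y - x) <= Rpower y r.
Proof.
  intros Hr Hx Hy.
  destruct (Rtotal_order x y) as [Hlt|[Heq|Hgt]].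
  - destruct (MVT_cor2 (fun z => Rpower z r) (fun z => r * Rpower z (r-1)) x y Hlt)
      as [c [Hc1 Hc2]].
    { intros c Hc. apply derivable_pt_lim_power; lra. }
    assert (Rpower x (r-1) <= Rpower c (r-1)) by (apply Rpower_mono; lra).
    assert (r * Rpower x (r-1) * (y - x) <= r * Rpower c (r-1) * (y-x)).
    { apply Rmult_le_compat_r; [lra|]. apply Rmult_le_compat_l; lra. }
    lra.
  - subst; lra.
  - destruct (MVT_cor2 (fun z => Rpower z r) (fun z => r * Rpower z (r-1)) y x Hgt)
      as [c [Hc1 Hc2]].
    { intros c Hc. apply derivable_pt_lim_power; lra. }
    assert (Rpower c (r-1) <= Rpower x (r-1)) by (apply Rpower_mono; lra).
    assert (r * Rpower c (r-1) * (x - y) <= r * Rpower x (r-1) * (x-y)).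
    { apply Rmult_le_compat_r; [lra|]. apply Rmult_le_compat_l; lra. }
    lra.
Qed.


Lemma Rpower_1_base (e : R) : Rpower 1 e = 1.
Proof. unfold Rpower; rewrite ln_1, Rmult_0_r; apply exp_0. Qed.

Lemma Rpower_split (x e : R) : 0 < x -> Rpower x (e + 1) = x * Rpower x e.
Proof. intros Hx; rewrite Rpower_plus, Rpower_1 by lra; ring. Qed.

Lemma case_2 (al h1 h2 : R) : 0 < al < 1 -> 0 < h2 <= h1 ->
  (1 - al - al / (2 - al)) * h1 * Rpower (h1 + h2) (- al) <=
  (Rpower (h1 + h2) (1 - al) - Rpower h2 (1 - al)) +
  / (h1 + h2) * (h2 * (0 + Rpower h2 (1 - al)) + 2 / (2 - al) * (0 - Rpower h2 (2 - al))).
Proof.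
  intros Hal Hh.
  set (L0 := h1 + h2).
  assert (HL0 : 0 < L0) by (unfold L0; lra).
  assert (T1 := tangent_conc (1 - al) L0 h2 ltac:(lra) HL0 ltac:(lra)).
  replace (1 - al - 1) with (- al) in T1 by ring.
  set (W := Rpower L0 (- al)) in *.
  assert (HW : 0 < W) by apply Rpower_pos.
  assert (E0 : Rpower L0 (1 - al) = L0 * W).
  { replace (1 - al) with (- al + 1) by ring. apply Rpower_split; lra. }
  assert (E2 : Rpower h2 (2 - al) = h2 * Rpower h2 (1 - al)).
  { replace (2 - al) with ((1 - al) + 1) by ring. apply Rpower_split; lra. }
  rewrite E2. rewrite E0 in T1 |- *.
  set (V := Rpower h2 (1 - al)) in *.
  assert (HV : V <= L0 * W).
  { rewrite <- E0. apply Rpower_mono; unfold L0; lra. }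
  assert (HV0 : 0 < V) by apply Rpower_pos.
  assert (Hb : / L0 * (h2 * (0 + V) + 2 / (2 - al) * (0 - h2 * V)) = - (al / (2 - al)) * (h2 * V / L0)).
  { field; lra. }
  rewrite Hb.
  assert (Hk : h2 * V / L0 <= h1 * W).
  { apply (Rmult_le_reg_r L0); [lra|]. unfold Rdiv. rewrite Rmult_assoc, Rinv_l, Rmult_1_r by lra.
    nra. }
  assert (0 <= al / (2 - al)) by (apply Rdiv_le_0_compat; lra).
  set (c := al / (2 - al)) in *. set (X := h2 * V / L0) in *.
  assert (c * X <= c * (h1 * W)) by (apply Rmult_le_compat_l; lra).
  assert (T1' : V <= L0 * W - (1 - al) * W * h1) by (unfold L0 in *; nra).
  nra.
Qed.


Lemma case_3 (al h1 h2 L2 : R) : 0 < al < 1 -> 0 < h2 <= h1 -> 0 < L2 ->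
  L2 + h2 + h1 <= 4 * L2 ->
  (3 * (1 - al) ^ 2 / 4) * h1 * Rpower (L2 + h2 + h1) (- al) <=
  (Rpower (L2 + h2 + h1) (1 - al) - Rpower (L2 + h2) (1 - al)) +
  / (h1 + h2) * (h2 * (Rpower L2 (1 - al) + Rpower (L2 + h2) (1 - al)) +
     2 / (2 - al) * (Rpower L2 (2 - al) - Rpower (L2 + h2) (2 - al))).
Proof.
  intros Hal Hh HL2 H4.
  set (L1 := L2 + h2). set (L0 := L1 + h1). set (m := L2 + h2 / 2).
  assert (HL1 : 0 < L1) by (unfold L1; lra).
  assert (HL0 : 0 < L0) by (unfold L0; lra).
  assert (Hm : 0 < m) by (unfold m; lra).
  assert (H4' : L0 <= 4 * L2) by (unfold L0, L1 in *; lra).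
  assert (T1 := tangent_conc (1 - al) L0 L1 ltac:(lra) HL0 HL1).
  replace (1 - al - 1) with (- al) in T1 by ring.
  assert (T2 := tangent_conv (2 - al) L1 m ltac:(lra) HL1 Hm).
  assert (T3 := tangent_conv (2 - al) m L2 ltac:(lra) Hm HL2).
  replace (2 - al - 1) with (1 - al) in T2, T3 by ring.
  assert (T4 := tangent_conc (1 - al) L2 m ltac:(lra) HL2 Hm).
  replace (1 - al - 1) with (- al) in T4 by ring.
  set (W := Rpower L0 (- al)) in *.
  set (Z := Rpower L2 (- al)) in *.
  assert (HW : 0 < W) by apply Rpower_pos.
  assert (HZ : 0 < Z) by apply Rpower_pos.
  assert (H4a : Rpower 4 al <= 1 + 3 * al).
  { assert (T := tangent_conc al 1 4 ltac:(lra) ltac:(lra) ltac:(lra)).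
    rewrite !Rpower_1_base in T. lra. }
  assert (HZW : Z <= Rpower 4 al * W).
  { unfold Z, W, Rpower. rewrite <- exp_plus. apply exp_le_m.
    assert (ln L0 <= ln 4 + ln L2).
    { rewrite <- ln_mult by lra. apply ln_le; lra. }
    assert (0 <= al * (ln 4 + ln L2 - ln L0)) by (apply Rmult_le_pos; lra).
    lra. }
  assert (HZW' : Z <= (1 + 3 * al) * W).
  { eapply Rle_trans; [apply HZW|]. apply Rmult_le_compat_r; lra. }
  set (A1 := Rpower L1 (1 - al)) in *.
  set (A0 := Rpower L0 (1 - al)) in *.
  set (A2 := Rpower L2 (1 - al)) in *.
  set (Am := Rpower m (1 - al)) in *.
  set (B1 := Rpower L1 (2 - al)) in *.
  set (B2 := Rpower L2 (2 - al)) in *.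
  set (Bm := Rpower m (2 - al)) in *.
  assert (HA1 : 0 < A1) by apply Rpower_pos.
  assert (HAm : 0 < Am) by apply Rpower_pos.
  assert (Hq : 2 / (2 - al) * (B2 - B1) >= - h2 * (A1 + Am)).
  { assert (B1 - B2 <= (2 - al) * (A1 + Am) * (h2 / 2)).
    { unfold m, L1 in *. nra. }
    assert (2 / (2 - al) * (B1 - B2) <= 2 / (2 - al) * ((2 - al) * (A1 + Am) * (h2 / 2))).
    { apply Rmult_le_compat_l; [apply Rdiv_le_0_compat; lra | lra]. }
    replace (2 / (2 - al) * ((2 - al) * (A1 + Am) * (h2 / 2))) with (h2 * (A1 + Am)) in H0
      by (field; lra).
    lra. }
  assert (Hin : h2 * (A2 + A1) + 2 / (2 - al) * (B2 - B1) >= - (1 - al) * h2 * h2 * Z / 2).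
  { assert (Am - A2 <= (1 - al) * Z * (h2 / 2)) by (unfold m in *; nra).
    assert (h2 * (Am - A2) <= h2 * ((1 - al) * Z * (h2 / 2))) by (apply Rmult_le_compat_l; lra).
    nra. }
  assert (Hb : / (h1 + h2) * (h2 * (A2 + A1) + 2 / (2 - al) * (B2 - B1)) >=
               - (1 - al) * (1 + 3 * al) * W * h1 / 4).
  { assert (Hp : 0 < / (h1 + h2)) by (apply Rinv_0_lt_compat; lra).
    assert (/ (h1 + h2) * (h2 * (A2 + A1) + 2 / (2 - al) * (B2 - B1)) >=
            / (h1 + h2) * (- (1 - al) * h2 * h2 * Z / 2)) by nra.
    assert (h2 * h2 * / (h1 + h2) <= h1 / 2).
    { apply (Rmult_le_reg_r (h1 + h2)); [lra|].
      rewrite Rmult_assoc, Rinv_l, Rmult_1_r by lra. nra. }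
    assert (Zb : (1 - al) * Z * (h2 * h2 * / (h1 + h2)) <= (1 - al) * ((1 + 3 * al) * W) * (h1 / 2)).
    { apply Rmult_le_compat; try nra. }
    nra. }
  assert (T1' : A1 <= A0 - (1 - al) * W * h1) by (unfold L0, L1 in *; nra).
  nra.
Qed.


Lemma final_bound (al a0 G h1 s L0 K kap : R) : G = Gamma (2 - al) -> 0 < al < 1 -> 0 < a0 -> 0 < G -> 0 < h1 ->
  0 < L0 -> L0 * a0 <= K -> al / 3 < kap ->
  kap * h1 * Rpower L0 (- al) <= s ->
  / (s / (G * h1)) < Calpha a0 al * Rpower K al.
Proof.
  intros HGe Hal Ha0 HG Hh1 HL0 HK Hkap Hs.
  set (W := Rpower L0 (- al)) in *.
  set (X := Rpower L0 al).
  set (A := Rpower a0 al).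
  set (KA := Rpower K al).
  assert (HW : 0 < W) by apply Rpower_pos.
  assert (HX : 0 < X) by apply Rpower_pos.
  assert (HA : 0 < A) by apply Rpower_pos.
  assert (HWX : W * X = 1).
  { unfold W, X. rewrite <- Rpower_plus. replace (- al + al) with 0 by ring.
    apply Rpower_O; lra. }
  assert (HXA : X * A <= KA).
  { unfold X, A, KA. rewrite Rpower_mult_distr by lra. apply Rpower_mono; try nra. }
  assert (Hkap0 : 0 < kap) by lra.
  assert (Hs0 : 0 < s) by (apply Rlt_le_trans with (kap * h1 * W); [|lra];
                            apply Rmult_lt_0_compat; [nra|lra]).
  assert (HC : 3 * G / (al * A) <= Calpha a0 al) by (unfold Calpha; rewrite HGe; apply Rmax_r).
  assert (E : / (s / (G * h1)) = G * h1 / s) by (field; lra).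
  rewrite E.
  assert (S1 : G * h1 / s <= G * X / kap).
  { apply (Rmult_le_reg_r s); [lra|]. unfold Rdiv.
    replace (G * h1 * / s * s) with (G * h1) by (field; lra).
    apply (Rmult_le_reg_r kap); [lra|].
    replace (G * X * / kap * s * kap) with (G * X * s) by (field; lra).
    assert (G * X * (kap * h1 * W) <= G * X * s) by (apply Rmult_le_compat_l; nra).
    replace (G * X * (kap * h1 * W)) with (G * h1 * kap * (W * X)) in H by ring.
    rewrite HWX in H. lra. }
  assert (S2 : G * X / kap < 3 * G / (al * A) * KA).
  { apply (Rmult_lt_reg_r (kap * al * A)); [apply Rmult_lt_0_compat; nra|].
    replace (G * X / kap * (kap * al * A)) with (G * al * (X * A)) by (field; lra).
    replace (3 * G / (al * A) * KA * (kap * al * A)) with (3 * kap * G * KA) by (field; lra).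
    assert (G * al * (X * A) <= G * al * KA) by (apply Rmult_le_compat_l; nra).
    assert (G * al * KA < 3 * kap * G * KA).
    { assert (0 < G * KA) by (apply Rmult_lt_0_compat; [lra| apply Rpower_pos]). nra. }
    lra. }
  assert (3 * G / (al * A) * KA <= Calpha a0 al * KA).
  { apply Rmult_le_compat_r; [left; apply Rpower_pos | lra]. }
  lra.
Qed.


Lemma exp_le_m' (x y : R) : x <= y -> exp x <= exp y.
Proof. intros H; destruct (Rle_lt_or_eq_dec _ _ H) as [H1|H1].
  left; apply exp_increasing; auto. subst; lra. Qed.

Definition gf (b t : R) := Rpower t b * exp (- t).

Lemma gf_cont (b x : R) : 0 < x -> continuous (gf b) x.
Proof.
  intros Hx. apply (@ex_derive_continuous R_AbsRing R_NormedModule). unfold gf, Rpower. auto_derive. lra.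
Qed.

Lemma gf_exRInt (b u v : R) : 0 < u -> 0 < v -> ex_RInt (gf b) u v.
Proof.
  intros Hu Hv. apply (@ex_RInt_continuous R_CompleteNormedModule). intros z Hz. apply gf_cont.
  assert (0 < Rmin u v) by (apply Rmin_glb_lt; lra). lra.
Qed.

Lemma gf_deriv (b x : R) : 0 < x -> is_derive (fun y => RInt (gf b) 1 y) x (gf b x).
Proof.
  intros Hx. apply (@is_derive_RInt R_CompleteNormedModule) with (a := 1).
  - assert (Hx2 : 0 < x / 2) by lra.
    exists (mkposreal _ Hx2). intros y Hy. simpl in Hy.
    apply RInt_correct. apply gf_exRInt; [lra|].
    unfold ball in Hy; simpl in Hy; unfold AbsRing_ball, abs, minus, plus, opp in Hy; simpl in Hy.
    apply Rabs_lt_between' in Hy. lra.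
  - apply gf_cont; lra.
Qed.


Lemma ballR (x e y : R) : ball x e y <-> Rabs (y - x) < e.
Proof. unfold ball; simpl; unfold AbsRing_ball, abs, minus, plus, opp; simpl. tauto. Qed.

Lemma lim_ge {T} (Fi : (T -> Prop) -> Prop) {FF : ProperFilter Fi} (f : T -> R) (l c : R) :
  filterlim f Fi (locally l) -> Fi (fun u => c <= f u) -> c <= l.
Proof.
  intros Hl Hc. destruct (Rle_or_lt c l) as [H|H]; [auto|exfalso].
  assert (He : 0 < c - l) by lra.
  assert (Hb : Fi (fun u => ball l (mkposreal _ He) (f u))).
  { apply Hl. apply locally_ball. }
  destruct (filter_ex _ (filter_and _ _ Hc Hb)) as [u [H1 H2]].
  apply ballR in H2. simpl in H2. apply Rabs_lt_between' in H2. lra.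
Qed.

Lemma lim_le {T} (Fi : (T -> Prop) -> Prop) {FF : ProperFilter Fi} (f : T -> R) (l c : R) :
  filterlim f Fi (locally l) -> Fi (fun u => f u <= c) -> l <= c.
Proof.
  intros Hl Hc. destruct (Rle_or_lt l c) as [H|H]; [auto|exfalso].
  assert (He : 0 < l - c) by lra.
  assert (Hb : Fi (fun u => ball l (mkposreal _ He) (f u))).
  { apply Hl. apply locally_ball. }
  destruct (filter_ex _ (filter_and _ _ Hc Hb)) as [u [H1 H2]].
  apply ballR in H2. simpl in H2. apply Rabs_lt_between' in H2. lra.
Qed.

Lemma Rpower_1_base' (e : R) : Rpower 1 e = 1.
Proof. unfold Rpower; rewrite ln_1, Rmult_0_r; apply exp_0. Qed.

Lemma gf_pos (b t : R) : 0 < gf b t.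
Proof. unfold gf, Rpower. apply Rmult_lt_0_compat; apply exp_pos. Qed.

Lemma gf_le1 (b t : R) : 0 <= b -> 0 < t <= 1 -> gf b t <= 1.
Proof.
  intros Hb Ht. unfold gf.
  assert (Rpower t b <= Rpower 1 b).
  { unfold Rpower. apply exp_le_m'. assert (ln t <= ln 1) by (apply ln_le; lra). nra. }
  rewrite Rpower_1_base' in H.
  assert (exp (- t) <= 1) by (rewrite <- exp_0; apply exp_le_m'; lra).
  assert (0 < Rpower t b) by (unfold Rpower; apply exp_pos).
  assert (0 < exp (-t)) by apply exp_pos. nra.
Qed.

Lemma gf_le_exp (b t : R) : 0 <= b <= 1 -> 1 <= t -> gf b t <= 2 * exp (- t / 2).
Proof.
  intros Hb Ht. unfold gf.
  assert (Rpower t b <= t).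
  { rewrite <- (Rpower_1 t) at 2 by lra. apply Rle_Rpower; lra. }
  assert (E : exp (- t) = exp (- t / 2) * exp (- t / 2)) by (rewrite <- exp_plus; f_equal; field).
  assert (E2 : exp (- t / 2) * exp (t / 2) = 1) by (rewrite <- exp_plus; replace (- t / 2 + t / 2) with 0 by field; apply exp_0).
  assert (H1 := exp_ineq1_le (t / 2)).
  assert (0 < exp (- t / 2)) by apply exp_pos.
  assert (t * exp (- t / 2) <= 2).
  { assert (t * exp (- t / 2) * exp (t / 2) <= 2 * exp (t / 2)) by nra.
    assert (0 < exp (t / 2)) by apply exp_pos. nra. }
  rewrite E.
  assert (0 < exp (- t)) by apply exp_pos.
  assert (0 < Rpower t b) by (unfold Rpower; apply exp_pos).
  nra.
Qed.


Lemma F_diff (b u v : R) : 0 < u -> 0 < v ->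
  RInt (gf b) 1 v - RInt (gf b) 1 u = RInt (gf b) u v.
Proof.
  intros Hu Hv. rewrite <- (RInt_Chasles (gf b) 1 u v) by (apply gf_exRInt; lra).
  unfold plus; simpl. ring.
Qed.

Lemma RInt_exp_tail (u v : R) : u <= v ->
  RInt (fun t => 2 * exp (- t / 2)) u v = 4 * exp (- u / 2) - 4 * exp (- v / 2).
Proof.
  intros Huv.
  apply is_RInt_unique.
  replace (4 * exp (- u / 2) - 4 * exp (- v / 2)) with
     (minus ((fun t => - 4 * exp (- t / 2)) v) ((fun t => - 4 * exp (- t / 2)) u))
    by (unfold minus, plus, opp; simpl; ring).
  apply (@is_RInt_derive R_CompleteNormedModule (fun t => - 4 * exp (- t / 2))).
  - intros x _. auto_derive; auto. unfold Rdiv. set (E := exp (- x * / 2)). simpl. field.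
  - intros x _. apply (@ex_derive_continuous R_AbsRing R_NormedModule). auto_derive. auto.
Qed.

Lemma gf_tail (b u v : R) : 0 <= b <= 1 -> 1 <= u <= v -> RInt (gf b) u v <= 4 * exp (- u / 2).
Proof.
  intros Hb Huv.
  rewrite <- (Rminus_0_r (4 * exp (- u / 2))).
  assert (0 < exp (- v / 2)) by apply exp_pos.
  apply Rle_trans with (4 * exp (- u / 2) - 4 * exp (- v / 2)); [|lra].
  rewrite <- RInt_exp_tail by lra.
  apply RInt_le; try lra.
  - apply gf_exRInt; lra.
  - apply (@ex_RInt_continuous R_CompleteNormedModule). intros z _.
    apply (@ex_derive_continuous R_AbsRing R_NormedModule). auto_derive. auto.
  - intros x Hx. apply gf_le_exp; lra.
Qed.

Lemma lim0 (b : R) : 0 <= b -> exists la, filterlim (fun y => RInt (gf b) 1 y) (at_right 0) (locally la).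
Proof.
  intros Hb.
  apply (@filterlim_locally_cauchy R R_CompleteSpace (at_right 0) (at_right_proper_filter 0)).
  intros eps.
  exists (fun u => 0 < u < Rmin 1 eps). split.
  - assert (Hm : 0 < Rmin 1 eps) by (apply Rmin_glb_lt; [lra | apply cond_pos]).
    exists (mkposreal _ Hm). intros y Hy Hy0. apply ballR in Hy. simpl in Hy.
    apply Rabs_lt_between' in Hy. lra.
  - intros u v Hu Hv. apply ballR. rewrite F_diff by lra.
    assert (Hm1 : Rmin 1 eps <= 1) by apply Rmin_l.
    assert (Hm2 : Rmin 1 eps <= eps) by apply Rmin_r.
    destruct (Rle_or_lt u v) as [Huv|Huv]; [|apply Rlt_le in Huv].
    + eapply Rle_lt_trans.
      { apply (abs_RInt_le_const (gf b) u v 1); [lra| apply gf_exRInt; lra|].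
        intros t Ht. rewrite Rabs_pos_eq by (left; apply gf_pos). apply gf_le1; lra. }
      lra.
    + rewrite <- (opp_RInt_swap (gf b) v u) by (apply gf_exRInt; lra).
      unfold opp; simpl. rewrite Rabs_Ropp.
      eapply Rle_lt_trans.
      { apply (abs_RInt_le_const (gf b) v u 1); [lra| apply gf_exRInt; lra|].
        intros t Ht. rewrite Rabs_pos_eq by (left; apply gf_pos). apply gf_le1; lra. }
      lra.
Qed.

Lemma tail_small (eps u : R) : 0 < eps -> 8 / eps < u -> 4 * exp (- u / 2) < eps.
Proof.
  intros He Hu.
  assert (H1 := exp_ineq1_le (u / 2)).
  assert (E2 : exp (- u / 2) * exp (u / 2) = 1) by (rewrite <- exp_plus; replace (- u / 2 + u / 2) with 0 by field; apply exp_0).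
  assert (0 < exp (- u / 2)) by apply exp_pos.
  assert (8 < u * eps).
  { apply (Rmult_lt_compat_r eps) in Hu; [|lra]. replace (8 / eps * eps) with 8 in Hu by (field; lra). lra. }
  assert (0 < 8 / eps) by (apply Rdiv_lt_0_compat; lra).
  assert (4 < eps * exp (u / 2)) by nra.
  assert (Hz : 4 * exp (- u / 2) < exp (- u / 2) * (eps * exp (u / 2))) by nra.
  replace (exp (- u / 2) * (eps * exp (u / 2))) with (eps * (exp (- u / 2) * exp (u / 2))) in Hz by ring.
  rewrite E2 in Hz. lra.
Qed.

Lemma liminf (b : R) : 0 <= b <= 1 -> exists lb, filterlim (fun y => RInt (gf b) 1 y) (Rbar_locally p_infty) (locally lb).
Proof.
  intros Hb.
  apply (@filterlim_locally_cauchy R R_CompleteSpace (Rbar_locally p_infty) (Rbar_locally_filter p_infty)).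
  intros eps.
  assert (He := cond_pos eps).
  exists (fun u => Rmax 1 (8 / eps) < u). split.
  - exists (Rmax 1 (8 / eps)). auto.
  - intros u v Hu Hv. apply ballR.
    assert (Hu1 := Rmax_l 1 (8 / eps)). assert (Hu2 := Rmax_r 1 (8 / eps)).
    rewrite F_diff by lra.
    destruct (Rle_or_lt u v) as [Huv|Huv]; [|apply Rlt_le in Huv].
    + assert (0 <= RInt (gf b) u v).
      { apply RInt_ge_0; [lra| apply gf_exRInt; lra|]. intros; left; apply gf_pos. }
      rewrite Rabs_pos_eq by lra.
      eapply Rle_lt_trans; [apply gf_tail; lra|]. apply tail_small; lra.
    + rewrite <- (opp_RInt_swap (gf b) v u) by (apply gf_exRInt; lra).
      unfold opp; simpl. rewrite Rabs_Ropp.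
      assert (0 <= RInt (gf b) v u).
      { apply RInt_ge_0; [lra| apply gf_exRInt; lra|]. intros; left; apply gf_pos. }
      rewrite Rabs_pos_eq by lra.
      eapply Rle_lt_trans; [apply gf_tail; lra|]. apply tail_small; lra.
Qed.


Lemma Gamma_pos (s : R) : 1 < s <= 2 -> 0 < Gamma s.
Proof.
  intros Hs.
  set (b := s - 1).
  assert (Hb : 0 <= b <= 1) by (unfold b; lra).
  set (F := fun y => RInt (gf b) 1 y).
  destruct (lim0 b ltac:(lra)) as [la Hla].
  destruct (liminf b Hb) as [lb Hlb].
  assert (Hloc : forall x, 0 < x -> locally x (fun y => gf b y = Derive F y)).
  { intros x Hx. assert (Hx2 : 0 < x / 2) by lra.
    exists (mkposreal _ Hx2). intros y Hy. apply ballR in Hy. simpl in Hy.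
    apply Rabs_lt_between' in Hy. symmetry. apply is_derive_unique. apply gf_deriv. lra. }
  assert (HI : is_RInt_gen (gf b) (at_right 0) (Rbar_locally p_infty) (lb - la)).
  { apply is_RInt_gen_ext with (f := Derive F).
    - apply Filter_prod with (fun a => 0 < a) (fun c => 0 < c).
      + exists (mkposreal 1 Rlt_0_1). intros y _ Hy. exact Hy.
      + exists 0. intros; auto.
      + intros a c Ha Hc x Hx. simpl in Hx.
        assert (0 < Rmin a c) by (apply Rmin_glb_lt; lra).
        apply is_derive_unique, gf_deriv. lra.
    - apply is_RInt_gen_Derive; try assumption.
      + apply Filter_prod with (fun a => 0 < a) (fun c => 0 < c).
        * exists (mkposreal 1 Rlt_0_1). intros y _ Hy. exact Hy.
        * exists 0. intros; auto.
        * intros a c Ha Hc x Hx. simpl in Hx.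
          assert (0 < Rmin a c) by (apply Rmin_glb_lt; lra).
          eexists. apply gf_deriv. lra.
      + apply Filter_prod with (fun a => 0 < a) (fun c => 0 < c).
        * exists (mkposreal 1 Rlt_0_1). intros y _ Hy. exact Hy.
        * exists 0. intros; auto.
        * intros a c Ha Hc x Hx. simpl in Hx.
          assert (0 < Rmin a c) by (apply Rmin_glb_lt; lra).
          apply continuous_ext_loc with (gf b). apply Hloc; lra. apply gf_cont; lra. }
  assert (HG : Gamma s = lb - la).
  { unfold Gamma. apply is_RInt_gen_unique. exact HI. }
  rewrite HG.
  assert (Hla0 : la <= 0).
  { apply (lim_le (at_right 0) F la 0 Hla).
    exists (mkposreal 1 Rlt_0_1). intros y Hy Hy0. apply ballR in Hy. simpl in Hy.
    apply Rabs_lt_between' in Hy. unfold F.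
    rewrite <- (opp_RInt_swap (gf b) y 1) by (apply gf_exRInt; lra).
    unfold opp; simpl.
    assert (0 <= RInt (gf b) y 1).
    { apply RInt_ge_0; [lra| apply gf_exRInt; lra|]. intros; left; apply gf_pos. }
    lra. }
  assert (Hlb2 : F 2 <= lb).
  { apply (lim_ge (Rbar_locally p_infty) F lb (F 2) Hlb).
    exists 2. intros u Hu. unfold F.
    assert (E := F_diff b 2 u ltac:(lra) ltac:(lra)).
    assert (0 <= RInt (gf b) 2 u).
    { apply RInt_ge_0; [lra| apply gf_exRInt; lra|]. intros; left; apply gf_pos. }
    lra. }
  assert (HF2 : 0 < F 2).
  { unfold F. apply RInt_gt_0; [lra| intros; apply gf_pos | intros; apply gf_cont; lra]. }
  lra.
Qed.



Lemma ln_le_sub1 (x : R) : 0 < x -> ln x <= x - 1.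
Proof. intros Hx. pose proof (exp_ineq1_le (ln x)). rewrite exp_ln in H by lra. lra. Qed.

Lemma rpow_pos_eq (x r : R) : 0 < x -> rpow x r = Rpower x r.
Proof. intros Hx. unfold rpow. destruct (Rle_dec x 0); [lra | reflexivity]. Qed.

Lemma rpow_0 (r : R) : rpow 0 r = 0.
Proof. unfold rpow. destruct (Rle_dec 0 0); [reflexivity | lra]. Qed.

Theorem lemma2p6 (al a0 T : R) :
  0 < al < 4701 / 10000 -> 0 < a0 -> a0 < T ->
  exists tau0 : R, 0 < tau0 /\
    forall N : nat, (0 < N)%nat -> tau a0 T N < tau0 ->
      forall k : nat, (1 <= k <= N)%nat ->
        / ccoef a0 T N al 1 k < Calpha a0 al * Rpower (INR k * tau a0 T N) al.
Proof.
  intros Hal Ha0 HT. exists (a0 / 6). split; [lra|].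
  intros N HN Htau k Hk.
  set (tt := tau a0 T N) in *.
  assert (Htt : 0 < tt).
  { unfold tt, tau. apply Rdiv_lt_0_compat; [lra| apply lt_0_INR; lia]. }
  assert (tkE : forall j, tk a0 T N j = a0 + INR j * tt) by reflexivity.
  assert (tpos : forall j, 0 < tk a0 T N j).
  { intros j. rewrite tkE. pose proof (pos_INR j). nra. }
  assert (HG : 0 < Gamma (2 - al)) by (apply Gamma_pos; lra).
  set (l := fun j => ln (tk a0 T N j)).
  assert (t0E : tk a0 T N 0 = a0) by (rewrite tkE; simpl; ring).
  assert (t1E : tk a0 T N 1 = a0 + tt) by (rewrite tkE; simpl; ring).
  assert (t2E : tk a0 T N 2 = a0 + 2 * tt) by (rewrite tkE; simpl; ring).
  assert (Hh1 : 0 < l 1%nat - l 0%nat).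
  { unfold l. assert (ln (tk a0 T N 0) < ln (tk a0 T N 1)).
    { apply ln_increasing; [apply tpos| rewrite t0E, t1E; lra]. } lra. }
  assert (Hh2 : 0 < l 2%nat - l 1%nat).
  { unfold l. assert (ln (tk a0 T N 1) < ln (tk a0 T N 2)).
    { apply ln_increasing; [apply tpos| rewrite t1E, t2E; lra]. } lra. }
  assert (Hh21 : l 2%nat - l 1%nat <= l 1%nat - l 0%nat).
  { unfold l. rewrite <- !ln_div by apply tpos.
    apply ln_le. apply Rdiv_lt_0_compat; apply tpos.
    rewrite t0E, t1E, t2E. apply (Rmult_le_reg_r ((a0 + tt) * a0)); [nra|].
    replace ((a0 + 2 * tt) / (a0 + tt) * ((a0 + tt) * a0)) with ((a0 + 2 * tt) * a0) by (field; lra).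
    replace ((a0 + tt) / a0 * ((a0 + tt) * a0)) with ((a0 + tt) * (a0 + tt)) by (field; lra).
    nra. }
  assert (HL0 : (l k - l 0%nat) * a0 <= INR k * tt).
  { unfold l. rewrite <- ln_div by apply tpos.
    pose proof (ln_le_sub1 (tk a0 T N k / tk a0 T N 0) ltac:(apply Rdiv_lt_0_compat; apply tpos)).
    rewrite t0E in *. rewrite tkE in H |- *.
    apply (Rmult_le_compat_r a0) in H; [|lra].
    replace (((a0 + INR k * tt) / a0 - 1) * a0) with (INR k * tt) in H by (field; lra).
    exact H. }
  unfold ccoef. cbv zeta.
  change (1 - 1)%nat with 0%nat.
  destruct (Nat.eqb_spec k 1) as [Hk1|Hk1].
  - subst k. unfold acoef. cbv zeta. change (1 - 1)%nat with 0%nat.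
    rewrite !ln_div by apply tpos. fold (l 0%nat) (l 1%nat).
    replace (l 1%nat - l 1%nat) with 0 by ring. rewrite rpow_0, rpow_pos_eq by lra.
    apply (final_bound al a0 (Gamma (2 - al)) _ _ (l 1%nat - l 0%nat) _ 1); try lra.
    replace (1 - al) with (- al + 1) by ring. rewrite Rpower_split by lra. lra.
  - assert (Hk2 : (2 <= k)%nat) by lia.
    change (1 =? 1)%nat with true. cbv iota.
    unfold acoef, bcoef. cbv zeta. change (2 - 2)%nat with 0%nat. change (2 - 1)%nat with 1%nat.
    change (1 - 1)%nat with 0%nat.
    rewrite !ln_div by apply tpos. fold (l 0%nat) (l 1%nat) (l 2%nat) (l k).
    assert (Hal' : 0 < al < 1) by lra.
    destruct (Nat.eq_dec k 2) as [Hk2'|Hk2'].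
    + subst k. replace (l 2%nat - l 2%nat) with 0 by ring. rewrite !rpow_0.
      replace (l 2%nat - l 0%nat) with ((l 1%nat - l 0%nat) + (l 2%nat - l 1%nat)) by ring.
      rewrite !(rpow_pos_eq (l 2%nat - l 1%nat)) by lra.
      rewrite !(rpow_pos_eq ((l 1%nat - l 0%nat) + (l 2%nat - l 1%nat))) by lra.
      apply (final_bound al a0 (Gamma (2 - al)) _ _ ((l 1%nat - l 0%nat) + (l 2%nat - l 1%nat)) _
               (1 - al - al / (2 - al))); try lra.
      * assert (E : al / (2 - al) * (2 - al) = al) by (field; lra).
        set (c := al / (2 - al)) in *. nra.
      * apply case_2; lra.
    + assert (Hk3 : (3 <= k)%nat) by lia.
      assert (HK3 : 3 <= INR k) by (replace 3 with (INR 3) by (simpl; ring); apply le_INR; lia).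
      assert (tkE' : tk a0 T N k = a0 + INR k * tt) by apply tkE.
      assert (HL2 : 0 < l k - l 2%nat).
      { unfold l. assert (ln (tk a0 T N 2) < ln (tk a0 T N k)).
        { apply ln_increasing; [apply tpos| rewrite t2E, tkE'; nra]. } lra. }
      assert (HA : (l 2%nat - l 0%nat) * a0 <= 2 * tt).
      { unfold l. rewrite <- ln_div by apply tpos.
        pose proof (ln_le_sub1 (tk a0 T N 2 / tk a0 T N 0) ltac:(apply Rdiv_lt_0_compat; apply tpos)).
        rewrite t0E, t2E in *.
        apply (Rmult_le_compat_r a0) in H; [|lra].
        replace (((a0 + 2 * tt) / a0 - 1) * a0) with (2 * tt) in H by (field; lra).
        exact H. }
      assert (HB : (INR k - 2) * tt <= (l k - l 2%nat) * tk a0 T N k).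
      { unfold l. 
        pose proof (ln_le_sub1 (tk a0 T N 2 / tk a0 T N k) ltac:(apply Rdiv_lt_0_compat; apply tpos)).
        rewrite ln_div in H by apply tpos.
        pose proof (tpos k).
        apply (Rmult_le_compat_r (tk a0 T N k)) in H; [|lra].
        replace ((tk a0 T N 2 / tk a0 T N k - 1) * tk a0 T N k) with (tk a0 T N 2 - tk a0 T N k) in H
          by (field; lra).
        set (u := ln (tk a0 T N 2)) in *. set (v := ln (tk a0 T N k)) in *.
        rewrite t2E, tkE' in H. rewrite tkE'. nra. }
      assert (HC : 2 * tk a0 T N k <= 3 * (INR k - 2) * a0) by (rewrite tkE'; nra).
      assert (H4 : l k - l 0%nat <= 4 * (l k - l 2%nat)).
      { set (x := l 2%nat - l 0%nat) in *. set (y := l k - l 2%nat) in *.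
        set (tK := tk a0 T N k) in *.
        assert (HtK : 0 < tK) by apply tpos.
        assert (x * a0 * tK <= 3 * y * tK * a0) by nra.
        assert (x <= 3 * y).
        { apply (Rmult_le_reg_r (a0 * tK)); [nra|]. nra. }
        replace (l k - l 0%nat) with (x + y) by (unfold x, y; ring). lra. }
      rewrite (rpow_pos_eq (l k - l 0%nat)) by lra.
      rewrite !(rpow_pos_eq (l k - l 1%nat)) by lra.
      rewrite !(rpow_pos_eq (l k - l 2%nat)) by lra.
      apply (final_bound al a0 (Gamma (2 - al)) _ _ (l k - l 0%nat) _
               (3 * (1 - al) ^ 2 / 4)); try lra.
      * nra.
      * replace (l k - l 0%nat) with ((l k - l 2%nat) + (l 2%nat - l 1%nat) + (l 1%nat - l 0%nat)) by ring.
        replace (l k - l 1%nat) with ((l k - l 2%nat) + (l 2%nat - l 1%nat)) by ring.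
        replace (l 2%nat - l 0%nat) with ((l 1%nat - l 0%nat) + (l 2%nat - l 1%nat)) by ring.
        apply case_3; try lra.
Qed.
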